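(* Let $J'=(z_w,z_w')$ be a nonempty open interval, let $r:J'\to\mathbb{R}$ be differentiable and non-increasing, and let $h:J'\to\mathbb{R}$ be differentiable with $\dot h(z)=1+h(z)^2-2r(z)h(z)$ on $J'$, having exactly one zero $z_*\in J'$. Let $G(z)=z-\dfrac{2h(z)}{2+h(z)^2-2r(z)h(z)}$. (1) If $0<r(z)<1$ for all $z\in(z_*,z_w')$, then $G$ is differentiable on $(z_*,z_w')$ and $\dot G(z)\ge 0$ for all $z\in(z_*,z_w')$. (2) If $-1<r(z)<0$ for all $z\in(z_w,z_* )$, then $G$ is differentiable on $(z_w,z_* )$ and $\dot G(z)\ge 0$ for all $z\in(z_w,z_* )$.
   Context: $\dot{}$ denotes differentiation with respect to $z$. Here $h<0$ on $(z_w,z_* )$ and $h>0$ on $(z_*,z_w')$ (consequence of $h(z_* )=0$, $\dot h(z_* )=1$ and uniqueness of the zero). *)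

(* Defs.v *)
From Stdlib Require Import Reals.
From Coquelicot Require Import Coquelicot.
Open Scope R_scope.

Definition in_oi (a b : Rbar) (z : R) : Prop := Rbar_lt a z /\ Rbar_lt z b.

Definition Gfun (r h : R -> R) (z : R) : R :=
  z - 2 * h z / (2 + h z ^ 2 - 2 * r z * h z).

(* Main.v *)
Require Import Defs.
From Stdlib Require Import Reals Lra Psatz.
From Coquelicot Require Import Coquelicot.
Open Scope R_scope.

Lemma deriv_nonpos (f : R -> R) (a b : Rbar) (x l : R) :
  Rbar_lt a x -> Rbar_lt x b ->
  (forall u v, in_oi a b u -> in_oi a b v -> u <= v -> f v <= f u) ->
  is_derive f x l -> l <= 0.
Proof.
  intros Ha Hb Hm Hd.
  apply is_derive_Reals in Hd.
  destruct (Rle_lt_dec l 0) as [Hl|Hl]; [exact Hl|exfalso].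
  assert (Ht0 : exists t0, 0 < t0 /\ Rbar_lt (x + t0) b).
  { destruct b as [b| |]; simpl in *.
    - exists ((b - x)/2); split; lra.
    - exists 1; split; [lra|exact I].
    - contradiction. }
  destruct Ht0 as [t0 [Ht0 Ht0b]].
  destruct (Hd (l/2) ltac:(lra)) as [delta Hdel].
  set (t := Rmin (delta/2) t0).
  assert (Htp : 0 < t).
  { unfold t; apply Rmin_pos; [pose proof (cond_pos delta); lra|lra]. }
  assert (Htd : t <= delta/2) by apply Rmin_l.
  assert (Htt : t <= t0) by apply Rmin_r.
  assert (Hin : in_oi a b (x + t)).
  { split.
    - destruct a as [a| |]; simpl in *; lra || auto.
    - destruct b as [b| |]; simpl in *; lra || auto. }
  assert (Hx : in_oi a b x) by (split; auto).
  specialize (Hm x (x + t) Hx Hin ltac:(lra)).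
  assert (Hh : t <> 0) by lra.
  assert (Ha2 : Rabs t < delta).
  { rewrite Rabs_pos_eq by lra. pose proof (cond_pos delta); lra. }
  specialize (Hdel t Hh Ha2).
  apply Rabs_def2 in Hdel. destruct Hdel as [H1 H2].
  assert (Hq : (f (x + t) - f x) / t <= 0).
  { unfold Rdiv. apply Rmult_le_0_r; [lra| left; apply Rinv_0_lt_compat; lra]. }
  lra.
Qed.

Lemma key (r h : R -> R) (z p H : R) :
  -1 < r z < 1 -> p <= 0 -> H = 1 + h z ^ 2 - 2 * r z * h z ->
  is_derive r z p -> is_derive h z H ->
  ex_derive (Gfun r h) z /\ 0 <= Derive (Gfun r h) z.
Proof.
  intros Hr Hp HH Dr Dh.
  set (D := 2 + h z ^ 2 - 2 * r z * h z).
  assert (HD : 1 < D).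
  { unfold D. assert (0 <= (h z - r z)^2) by apply pow2_ge_0. nra. }
  set (E := ((H - 1)^2 + 2 * H * h z ^ 2 - 4 * p * h z ^ 2) / D ^ 2).
  assert (Hder : is_derive (Gfun r h) z E).
  { unfold Gfun. auto_derive.
    - repeat split; try (eexists; eassumption).
      fold D. replace (2 + h z * (h z * 1) + - (2 * r z * h z)) with D
        by (unfold D; ring). lra.
    - replace (Derive (fun x => h x) z) with H
        by (symmetry; apply is_derive_unique; exact Dh).
      replace (Derive (fun x => r x) z) with p
        by (symmetry; apply is_derive_unique; exact Dr).
      unfold E. replace (2 + h z * (h z * 1) + - (2 * r z * h z)) with D
        by (unfold D; ring).
      assert (Dn : D <> 0) by lra.
      subst H. unfold D. field. fold D. exact Dn. }
  split; [eexists; exact Hder|].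
  rewrite (is_derive_unique _ _ _ Hder).
  unfold E. apply Rdiv_le_0_compat; [|nra].
  assert (0 < H).
  { subst H. assert (0 <= (h z - r z)^2) by apply pow2_ge_0. nra. }
  assert (0 <= (H - 1)^2) by apply pow2_ge_0.
  assert (0 <= h z ^ 2) by apply pow2_ge_0.
  assert (0 <= H * h z ^ 2) by (apply Rmult_le_pos; lra).
  assert (0 <= - p * h z ^ 2) by (apply Rmult_le_pos; lra).
  lra.
Qed.

Theorem lemma3p3 (zw zw' : Rbar) (r h : R -> R) (zs : R) :
  Rbar_lt zw zw' ->
  (forall z, in_oi zw zw' z -> ex_derive r z) ->
  (forall x y, in_oi zw zw' x -> in_oi zw zw' y -> x <= y -> r y <= r x) ->
  (forall z, in_oi zw zw' z -> is_derive h z (1 + h z ^ 2 - 2 * r z * h z)) ->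
  in_oi zw zw' zs -> h zs = 0 ->
  (forall z, in_oi zw zw' z -> h z = 0 -> z = zs) ->
  ((forall z : R, zs < z -> Rbar_lt z zw' -> 0 < r z < 1) ->
     forall z : R, zs < z -> Rbar_lt z zw' ->
       ex_derive (Gfun r h) z /\ 0 <= Derive (Gfun r h) z)
  /\
  ((forall z : R, Rbar_lt zw z -> z < zs -> -1 < r z < 0) ->
     forall z : R, Rbar_lt zw z -> z < zs ->
       ex_derive (Gfun r h) z /\ 0 <= Derive (Gfun r h) z).
Proof.
  intros Hw Hrd Hmon Hhd Hzs _ _.
  assert (Gen : forall z, in_oi zw zw' z -> -1 < r z < 1 ->
    ex_derive (Gfun r h) z /\ 0 <= Derive (Gfun r h) z).
  { intros z Hz Hr.
    destruct (Hrd z Hz) as [p Dr].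
    apply (key r h z p (1 + h z ^ 2 - 2 * r z * h z)); auto.
    destruct Hz as [Hz1 Hz2].
    exact (deriv_nonpos r zw zw' z p Hz1 Hz2 Hmon Dr). }
  destruct Hzs as [Hzs1 Hzs2].
  split.
  - intros Hr z Hz1 Hz2. apply Gen.
    + split; auto. destruct zw as [a| |]; simpl in *; lra || auto.
    + specialize (Hr z Hz1 Hz2); lra.
  - intros Hr z Hz1 Hz2. apply Gen.
    + split; auto. destruct zw' as [a| |]; simpl in *; lra || auto.
    + specialize (Hr z Hz1 Hz2); lra.
Qed.
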